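(* For every cartesian left-additive category $\mathcal{C}$, the category $\mathbf{Lens}_A(\mathcal{C})$ is a cartesian left-additive category, and every cartesian left-additive functor $F:\mathcal{C}\to\mathcal{D}$ induces a cartesian left-additive functor $\mathbf{Lens}_A(F):\mathbf{Lens}_A(\mathcal{C})\to\mathbf{Lens}_A(\mathcal{D})$, sending an object $(A,A')$ to $(F(A),F(A'))$ and a lens $(f,f^* )$ to $(F(f),\overline{f^*})$ where $\overline{f^*}$ is the composite $F(A)\times F(B')\cong F(A\times B')\xrightarrow{F(f^* )}F(A')$. This assignment preserves identities and composition, so that $\mathbf{Lens}_A$ is a functor $\mathbf{CLACat}\to\mathbf{CLACat}$.
   Context: Composition is written diagrammatically: $f;g$ means first $f$ then $g$. A left additive category is a category in which each hom-set is a commutative monoid (addition $+$, zero maps $0$) such that $f;(g+h)=f;g+f;h$ and $f;0=0$. A map $h:X\to Y$ is additive if $(x+y);h=x;h+y;h$ and $0;h=0$ for all $x,y:Z\to X$. A cartesian left-additive category is a left additive category with chosen finite products (projections $\pi_i$, pairing $\langle-,-\rangle$, terminal object) in which all projections are additive. A morphism $f:X\times A\to B$ is additive in the second variable (the variable $A$) if for all $x:Z\to X$ and $a_1,a_2:Z\to A$ one has $\langle x,a_1+a_2\rangle;f=\langle x,a_1\rangle;f+\langle x,a_2\rangle;f$ and $\langle x,0\rangle;f=0$ (equivalently, $f$ is additive as a map $A\to B$ in the coKleisli category of the comonad $X\times-$). $\mathbf{CLACat}$ is the category whose objects are cartesian left-additive categories and whose morphisms are cartesian left-additive functors, i.e.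 functors preserving finite products and the commutative monoid structure on hom-sets ($F(f+g)=F(f)+F(g)$, $F(0)=0$). For a cartesian category $\mathcal{C}$, $\mathbf{Lens}(\mathcal{C})$ has objects pairs $(A,A')$ of objects of $\mathcal{C}$; a morphism $(A,A')\to(B,B')$ is a pair $(f,f^* )$ with $f:A\to B$ and $f^*:A\times B'\to A'$; the identity on $(A,A')$ is $(1_A,\pi_1)$; the composite of $(f,f^* ):(A,A')\to(B,B')$ and $(g,g^* ):(B,B')\to(C,C')$ is $(f;g,\ \langle\pi_0,\langle\pi_0;f,\pi_1\rangle;g^*\rangle;f^* )$. For a cartesian left-additive category $\mathcal{C}$, $\mathbf{Lens}_A(\mathcal{C})$ is the wide subcategory of $\mathbf{Lens}(\mathcal{C})$ consisting of those lenses $(f,f^* )$ whose backward map $f^*:A\times B'\to A'$ is additive in the second variable. *)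

(* Defs.v *)
From Stdlib Require Import ClassicalEpsilon.

Set Implicit Arguments.
Unset Strict Implicit.

Record CatData := {
  ob :> Type;
  hom : ob -> ob -> Type;
  idm : forall A : ob, hom A A;
  comp : forall A B C : ob, hom A B -> hom B C -> hom A C }.
Arguments hom {_} _ _.
Arguments idm {_} _.
Arguments comp {_ _ _ _} _ _.
Notation "f ;; g" := (comp f g) (at level 40, left associativity).

Record IsCat (K : CatData) : Prop := {
  cat_assoc : forall (A B C D : K) (f : hom A B) (g : hom B C) (h : hom C D),
      (f ;; g) ;; h = f ;; (g ;; h);
  cat_idl : forall (A B : K) (f : hom A B), idm A ;; f = f;
  cat_idr : forall (A B : K) (f : hom A B), f ;; idm B = f }.

Record CLAStr (K : CatData) := {
  cadd : forall A B : K, hom A B -> hom A B -> hom A B;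
  czero : forall A B : K, hom A B;
  cprod : K -> K -> K;
  cpi0 : forall A B : K, hom (cprod A B) A;
  cpi1 : forall A B : K, hom (cprod A B) B;
  cpair : forall Z A B : K, hom Z A -> hom Z B -> hom Z (cprod A B);
  cterm : K;
  cbang : forall A : K, hom A cterm }.
Arguments cadd {K} S {A B} f g : rename.
Arguments czero {K} S A B : rename.
Arguments cprod {K} S A B : rename.
Arguments cpi0 {K} S A B : rename.
Arguments cpi1 {K} S A B : rename.
Arguments cpair {K} S {Z A B} f g : rename.
Arguments cterm {K} S : rename.
Arguments cbang {K} S A : rename.

Record IsCLA (K : CatData) (S : CLAStr K) : Prop := {
  cla_addA : forall (A B : K) (f g h : hom A B),
      cadd S (cadd S f g) h = cadd S f (cadd S g h);
  cla_addC : forall (A B : K) (f g : hom A B), cadd S f g = cadd S g f;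
  cla_add0 : forall (A B : K) (f : hom A B), cadd S f (czero S A B) = f;
  cla_comp_addr : forall (A B C : K) (f : hom A B) (g h : hom B C),
      f ;; cadd S g h = cadd S (f ;; g) (f ;; h);
  cla_comp_zeror : forall (A B C : K) (f : hom A B),
      f ;; czero S B C = czero S A C;
  cla_pair_pi0 : forall (Z A B : K) (f : hom Z A) (g : hom Z B),
      cpair S f g ;; cpi0 S A B = f;
  cla_pair_pi1 : forall (Z A B : K) (f : hom Z A) (g : hom Z B),
      cpair S f g ;; cpi1 S A B = g;
  cla_pair_uniq : forall (Z A B : K) (f : hom Z A) (g : hom Z B)
      (h : hom Z (cprod S A B)),
      h ;; cpi0 S A B = f -> h ;; cpi1 S A B = g -> h = cpair S f g;
  cla_bang_uniq : forall (A : K) (h : hom A (cterm S)), h = cbang S A;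
  cla_pi0_add : forall (Z A B : K) (x y : hom Z (cprod S A B)),
      cadd S x y ;; cpi0 S A B = cadd S (x ;; cpi0 S A B) (y ;; cpi0 S A B);
  cla_pi0_zero : forall (Z A B : K),
      czero S Z (cprod S A B) ;; cpi0 S A B = czero S Z A;
  cla_pi1_add : forall (Z A B : K) (x y : hom Z (cprod S A B)),
      cadd S x y ;; cpi1 S A B = cadd S (x ;; cpi1 S A B) (y ;; cpi1 S A B);
  cla_pi1_zero : forall (Z A B : K),
      czero S Z (cprod S A B) ;; cpi1 S A B = czero S Z B }.

Record CLACat := {
  ccat :> CatData;
  ccla : CLAStr ccat;
  ccat_ok : IsCat ccat;
  ccla_ok : IsCLA ccla }.

Record FunData (C D : CatData) := {
  fob : C -> D;
  fmap : forall A B : C, hom A B -> hom (fob A) (fob B) }.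
Arguments fob {C D} F A : rename.
Arguments fmap {C D} F {A B} f : rename.

Definition idF (C : CatData) : FunData C C :=
  {| fob := fun A => A; fmap := fun A B f => f |}.

Definition compF (C D E : CatData) (F : FunData C D) (G : FunData D E)
  : FunData C E :=
  {| fob := fun A => fob G (fob F A); fmap := fun A B f => fmap G (fmap F f) |}.

Record IsCLAFun (C D : CatData) (SC : CLAStr C) (SD : CLAStr D)
    (F : FunData C D) : Prop := {
  clf_id : forall A : C, fmap F (idm A) = idm (fob F A);
  clf_comp : forall (A B E : C) (f : hom A B) (g : hom B E),
      fmap F (f ;; g) = fmap F f ;; fmap F g;
  clf_add : forall (A B : C) (f g : hom A B),
      fmap F (cadd SC f g) = cadd SD (fmap F f) (fmap F g);
  clf_zero : forall A B : C,
      fmap F (czero SC A B) = czero SD (fob F A) (fob F B);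
  clf_prod : forall A B : C,
      exists psi : hom (cprod SD (fob F A) (fob F B)) (fob F (cprod SC A B)),
        psi ;; cpair SD (fmap F (cpi0 SC A B)) (fmap F (cpi1 SC A B))
          = idm _ /\
        cpair SD (fmap F (cpi0 SC A B)) (fmap F (cpi1 SC A B)) ;; psi
          = idm _;
  clf_term : exists t : hom (cterm SD) (fob F (cterm SC)),
      t ;; cbang SD _ = idm _ /\ cbang SD _ ;; t = idm _ }.

Definition CLAFun (C D : CLACat) (F : FunData C D) : Prop :=
  IsCLAFun (ccla C) (ccla D) F.

(** Objects of Lens(C): pairs (A, A').  Primitive record, so that eta holds
    definitionally. *)
#[projections(primitive)]
Record lob (T : Type) := mklob { lo1 : T; lo2 : T }.
Arguments mklob {T} _ _.
Arguments lo1 {T} _.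
Arguments lo2 {T} _.

Section LensA.
Variable C : CLACat.
Local Notation S := (ccla C).
Local Notation "A ** B" := (cprod S A B) (at level 30).
Local Notation "f +' g" := (cadd S f g) (at level 50).
Local Notation "<< f , g >>" := (cpair S f g).

Definition additive2 (X A B : C) (f : hom (X ** A) B) : Prop :=
  (forall (Z : C) (x : hom Z X) (a1 a2 : hom Z A),
      <<x, a1 +' a2>> ;; f = (<<x, a1>> ;; f) +' (<<x, a2>> ;; f)) /\
  (forall (Z : C) (x : hom Z X), <<x, czero S Z A>> ;; f = czero S Z B).

Record alens (A B : lob C) := {
  lfwd : hom (lo1 A) (lo1 B);
  lbwd : hom (lo1 A ** lo2 B) (lo2 A);
  lbwd_add : additive2 lbwd }.

Let assoc := cat_assoc (ccat_ok C).
Let pp0 := cla_pair_pi0 (ccla_ok C).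
Let pp1 := cla_pair_pi1 (ccla_ok C).

Lemma pair_comp (Z' Z A B : C) (h : hom Z' Z) (f : hom Z A) (g : hom Z B) :
  h ;; <<f, g>> = <<h ;; f, h ;; g>>.
Proof.
  apply (cla_pair_uniq (ccla_ok C)); rewrite assoc; [rewrite pp0 | rewrite pp1];
  reflexivity.
Qed.

Lemma lid_add (A : lob C) : additive2 (cpi1 S (lo1 A) (lo2 A)).
Proof. split; intros; rewrite !pp1; reflexivity. Qed.

Definition lid (A : lob C) : alens A A :=
  {| lfwd := idm _; lbwd := cpi1 S _ _; lbwd_add := lid_add A |}.

Definition lcomp_bwd (A B D : lob C) (f : alens A B) (g : alens B D)
  : hom (lo1 A ** lo2 D) (lo2 A) :=
  << cpi0 S _ _, << cpi0 S _ _ ;; lfwd f, cpi1 S _ _ >> ;; lbwd g >> ;; lbwd f.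

Lemma lcomp_key (Z X Y W V : C) (x : hom Z X) (c : hom Z W)
    (f : hom X Y) (gs : hom (Y ** W) V) :
  <<x, c>> ;; << cpi0 S X W, << cpi0 S X W ;; f, cpi1 S X W >> ;; gs >>
  = <<x, <<x ;; f, c>> ;; gs>>.
Proof.
  rewrite pair_comp, pp0, <- assoc, pair_comp, <- assoc, pp0, pp1.
  reflexivity.
Qed.

Lemma lcomp_add (A B D : lob C) (f : alens A B) (g : alens B D) :
  additive2 (lcomp_bwd f g).
Proof.
  destruct (lbwd_add f) as [fa fz]; destruct (lbwd_add g) as [ga gz].
  unfold lcomp_bwd; split; intros.
  - rewrite <- !assoc, !lcomp_key, ga, fa; reflexivity.
  - rewrite <- !assoc, !lcomp_key, gz, fz; reflexivity.
Qed.

Definition lcomp (A B D : lob C) (f : alens A B) (g : alens B D) : alens A D :=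
  {| lfwd := lfwd f ;; lfwd g; lbwd := lcomp_bwd f g;
     lbwd_add := lcomp_add f g |}.

Definition LensA : CatData :=
  {| ob := lob C; hom := @alens; idm := lid; comp := lcomp |}.

End LensA.

Section LensAFun.
Variables (C D : CLACat) (F : FunData C D) (HF : CLAFun F).
Local Notation SC := (ccla C).
Local Notation SD := (ccla D).

Local Notation phi A B := (cpair SD (fmap F (cpi0 SC A B)) (fmap F (cpi1 SC A B))).

Definition prod_inv (A B : C)
  : hom (cprod SD (fob F A) (fob F B)) (fob F (cprod SC A B)) :=
  proj1_sig (constructive_indefinite_description _ (clf_prod HF A B)).

Lemma prod_inv_spec (A B : C) :
  prod_inv A B ;; phi A B = idm _ /\ phi A B ;; prod_inv A B = idm _.
Proof. exact (proj2_sig (constructive_indefinite_description _ (clf_prod HF A B))). Qed.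

Let cC := ccat_ok C.
Let cD := ccat_ok D.
Let lC := ccla_ok C.
Let lD := ccla_ok D.

Lemma prod_inv_pi0 (A B : C) :
  prod_inv A B ;; fmap F (cpi0 SC A B) = cpi0 SD _ _.
Proof.
  destruct (prod_inv_spec A B) as [H1 _].
  rewrite <- (cla_pair_pi0 lD (fmap F (cpi0 SC A B)) (fmap F (cpi1 SC A B))).
  rewrite <- (cat_assoc cD), H1, (cat_idl cD). reflexivity.
Qed.

Lemma prod_inv_pi1 (A B : C) :
  prod_inv A B ;; fmap F (cpi1 SC A B) = cpi1 SD _ _.
Proof.
  destruct (prod_inv_spec A B) as [H1 _].
  rewrite <- (cla_pair_pi1 lD (fmap F (cpi0 SC A B)) (fmap F (cpi1 SC A B))).
  rewrite <- (cat_assoc cD), H1, (cat_idl cD). reflexivity.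
Qed.

Lemma prod_inv_cancel (Z : D) (A B : C) (h : hom Z (fob F (cprod SC A B)))
    (k : hom Z (cprod SD (fob F A) (fob F B))) :
  h ;; fmap F (cpi0 SC A B) = k ;; cpi0 SD _ _ ->
  h ;; fmap F (cpi1 SC A B) = k ;; cpi1 SD _ _ ->
  h = k ;; prod_inv A B.
Proof.
  intros E0 E1.
  destruct (prod_inv_spec A B) as [_ H2].
  assert (Hk : h ;; phi A B = k).
  { rewrite (pair_comp (C:=D)). symmetry.
    apply (cla_pair_uniq lD); symmetry; assumption. }
  rewrite <- Hk, (cat_assoc cD), H2, (cat_idr cD). reflexivity.
Qed.

Definition fbar (A B : lob C) (l : alens A B)
  : hom (cprod SD (fob F (lo1 A)) (fob F (lo2 B))) (fob F (lo2 A)) :=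
  prod_inv (lo1 A) (lo2 B) ;; fmap F (lbwd l).

Lemma fbar_add (A B : lob C) (l : alens A B) : additive2 (fbar l).
Proof.
  destruct (lbwd_add l) as [la lz].
  unfold fbar; split.
  - intros Z x b1 b2.

    set (w := cpair SD x (cpair SD b1 b2 ;; prod_inv (lo2 B) (lo2 B)) ;; prod_inv (lo1 A) (cprod SC (lo2 B) (lo2 B))).
    assert (w0 : w ;; fmap F (cpi0 SC (lo1 A) (cprod SC (lo2 B) (lo2 B))) = x).
    { unfold w. rewrite (cat_assoc cD), prod_inv_pi0, (cla_pair_pi0 lD). reflexivity. }
    assert (w1 : w ;; fmap F (cpi1 SC (lo1 A) (cprod SC (lo2 B) (lo2 B))) = cpair SD b1 b2 ;; prod_inv (lo2 B) (lo2 B)).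
    { unfold w. rewrite (cat_assoc cD), prod_inv_pi1, (cla_pair_pi1 lD). reflexivity. }
    assert (gen : forall t : hom (cprod SC (lo1 A) (cprod SC (lo2 B) (lo2 B))) (lo2 B),
      w ;; fmap F (cpair SC (cpi0 SC (lo1 A) (cprod SC (lo2 B) (lo2 B))) t)
      = cpair SD x (w ;; fmap F t) ;; prod_inv (lo1 A) (lo2 B)).
    { intro t. apply prod_inv_cancel.
      - rewrite (cat_assoc cD), <- (clf_comp HF), (cla_pair_pi0 lC), w0, (cla_pair_pi0 lD).
        reflexivity.
      - rewrite (cat_assoc cD), <- (clf_comp HF), (cla_pair_pi1 lC), (cla_pair_pi1 lD).
        reflexivity. }
    assert (t0 : w ;; fmap F (cpi1 SC (lo1 A) (cprod SC (lo2 B) (lo2 B)) ;; cpi0 SC (lo2 B) (lo2 B)) = b1).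
    { rewrite (clf_comp HF), <- (cat_assoc cD), w1, (cat_assoc cD), prod_inv_pi0,
        (cla_pair_pi0 lD). reflexivity. }
    assert (t1 : w ;; fmap F (cpi1 SC (lo1 A) (cprod SC (lo2 B) (lo2 B)) ;; cpi1 SC (lo2 B) (lo2 B)) = b2).
    { rewrite (clf_comp HF), <- (cat_assoc cD), w1, (cat_assoc cD), prod_inv_pi1,
        (cla_pair_pi1 lD). reflexivity. }
    pose proof (la (cprod SC (lo1 A) (cprod SC (lo2 B) (lo2 B))) (cpi0 SC (lo1 A) (cprod SC (lo2 B) (lo2 B)))
                  (cpi1 SC (lo1 A) (cprod SC (lo2 B) (lo2 B)) ;; cpi0 SC (lo2 B) (lo2 B))
                  (cpi1 SC (lo1 A) (cprod SC (lo2 B) (lo2 B)) ;; cpi1 SC (lo2 B) (lo2 B))) as E.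
    apply (f_equal (fmap F)) in E.
    apply (f_equal (fun h => w ;; h)) in E.
    rewrite (clf_add HF), (cla_comp_addr lD) in E.
    rewrite !(clf_comp HF (cpair SC _ _)), <- !(cat_assoc cD), !gen in E.
    rewrite t0, t1, (clf_add HF), (cla_comp_addr lD), t0, t1 in E.
    rewrite <- !(cat_assoc cD). exact E.
  - intros Z x.
    pose proof (lz (lo1 A) (idm (lo1 A))) as E.
    apply (f_equal (fmap F)) in E.
    apply (f_equal (fun h => x ;; h)) in E.
    rewrite (clf_comp HF), <- (cat_assoc cD), (clf_zero HF), (cla_comp_zeror lD) in E.
    rewrite <- E, <- (cat_assoc cD). f_equal. symmetry.
    apply prod_inv_cancel.
    + rewrite (cat_assoc cD), <- (clf_comp HF), (cla_pair_pi0 lC), (clf_id HF),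
        (cat_idr cD), (cla_pair_pi0 lD). reflexivity.
    + rewrite (cat_assoc cD), <- (clf_comp HF), (cla_pair_pi1 lC), (clf_zero HF),
        (cla_comp_zeror lD), (cla_pair_pi1 lD). reflexivity.
Qed.

Definition LensA_fun : FunData (LensA C) (LensA D) :=
  @Build_FunData (LensA C) (LensA D)
    (fun A : lob C => mklob (fob F (lo1 A)) (fob F (lo2 A)))
    (fun (A B : lob C) (l : alens A B) =>
       @Build_alens D (mklob (fob F (lo1 A)) (fob F (lo2 A)))
         (mklob (fob F (lo1 B)) (fob F (lo2 B)))
         (fmap F (lfwd l)) (fbar l) (fbar_add l)).

End LensAFun.
Arguments LensA_fun {C D F} HF.

(* Main.v *)
Require Import Defs.
From Stdlib Require Import ClassicalEpsilon FunctionalExtensionality ProofIrrelevance.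
Set Implicit Arguments.
Unset Strict Implicit.

Section Gen.
Context {C : CLACat}.
Local Notation S := (ccla C).

Lemma cassoc (A B X Y : C) (f : hom A B) (g : hom B X) (h : hom X Y) :
  (f ;; g) ;; h = f ;; (g ;; h).
Proof. exact (cat_assoc (ccat_ok C) f g h). Qed.
Lemma cidl (A B : C) (f : hom A B) : idm A ;; f = f.
Proof. exact (cat_idl (ccat_ok C) f). Qed.
Lemma cidr (A B : C) (f : hom A B) : f ;; idm B = f.
Proof. exact (cat_idr (ccat_ok C) f). Qed.
Lemma cpp0 (Z A B : C) (f : hom Z A) (g : hom Z B) : cpair S f g ;; cpi0 S A B = f.
Proof. exact (cla_pair_pi0 (ccla_ok C) f g). Qed.
Lemma cpp1 (Z A B : C) (f : hom Z A) (g : hom Z B) : cpair S f g ;; cpi1 S A B = g.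
Proof. exact (cla_pair_pi1 (ccla_ok C) f g). Qed.
Lemma cpair_comp (Z' Z A B : C) (h : hom Z' Z) (f : hom Z A) (g : hom Z B) :
  h ;; cpair S f g = cpair S (h ;; f) (h ;; g).
Proof. exact (pair_comp h f g). Qed.
Lemma cpair_uniq (Z A B : C) (f : hom Z A) (g : hom Z B) (h : hom Z (cprod S A B)) :
  h ;; cpi0 S A B = f -> h ;; cpi1 S A B = g -> h = cpair S f g.
Proof. apply (cla_pair_uniq (ccla_ok C)). Qed.
Lemma cpair_eta (Z A B : C) (h : hom Z (cprod S A B)) :
  cpair S (h ;; cpi0 S A B) (h ;; cpi1 S A B) = h.
Proof. symmetry; apply cpair_uniq; reflexivity. Qed.
Lemma cpair_eta0 (A B : C) : cpair S (cpi0 S A B) (cpi1 S A B) = idm _.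
Proof. symmetry; apply cpair_uniq; apply cidl. Qed.
Lemma cbang_uniq (A : C) (h : hom A (cterm S)) : h = cbang S A.
Proof. exact (cla_bang_uniq (ccla_ok C) h). Qed.
Lemma caddA (A B : C) (f g h : hom A B) : cadd S (cadd S f g) h = cadd S f (cadd S g h).
Proof. exact (cla_addA (ccla_ok C) f g h). Qed.
Lemma caddC (A B : C) (f g : hom A B) : cadd S f g = cadd S g f.
Proof. exact (cla_addC (ccla_ok C) f g). Qed.
Lemma cadd0 (A B : C) (f : hom A B) : cadd S f (czero S A B) = f.
Proof. exact (cla_add0 (ccla_ok C) f). Qed.
Lemma cadd0l (A B : C) (f : hom A B) : cadd S (czero S A B) f = f.
Proof. rewrite caddC; apply cadd0. Qed.
Lemma ccompD (A B X : C) (f : hom A B) (g h : hom B X) :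
  f ;; cadd S g h = cadd S (f ;; g) (f ;; h).
Proof. exact (cla_comp_addr (ccla_ok C) f g h). Qed.
Lemma ccomp0 (A B X : C) (f : hom A B) : f ;; czero S B X = czero S A X.
Proof. apply (cla_comp_zeror (ccla_ok C)). Qed.
Lemma cpi0D (Z A B : C) (x y : hom Z (cprod S A B)) :
  cadd S x y ;; cpi0 S A B = cadd S (x ;; cpi0 S A B) (y ;; cpi0 S A B).
Proof. exact (cla_pi0_add (ccla_ok C) x y). Qed.
Lemma cpi1D (Z A B : C) (x y : hom Z (cprod S A B)) :
  cadd S x y ;; cpi1 S A B = cadd S (x ;; cpi1 S A B) (y ;; cpi1 S A B).
Proof. exact (cla_pi1_add (ccla_ok C) x y). Qed.
Lemma cpi0Z (Z A B : C) : czero S Z (cprod S A B) ;; cpi0 S A B = czero S Z A.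
Proof. exact (cla_pi0_zero (ccla_ok C) Z A B). Qed.
Lemma cpi1Z (Z A B : C) : czero S Z (cprod S A B) ;; cpi1 S A B = czero S Z B.
Proof. exact (cla_pi1_zero (ccla_ok C) Z A B). Qed.
Lemma cpairD (Z A B : C) (a c : hom Z A) (b d : hom Z B) :
  cadd S (cpair S a b) (cpair S c d) = cpair S (cadd S a c) (cadd S b d).
Proof. apply cpair_uniq; rewrite ?cpi0D, ?cpi1D, ?cpp0, ?cpp1; reflexivity. Qed.
Lemma cpairZ (Z A B : C) : cpair S (czero S Z A) (czero S Z B) = czero S Z (cprod S A B).
Proof. symmetry; apply cpair_uniq; [apply cpi0Z | apply cpi1Z]. Qed.
Lemma cadd_swap (A B : C) (a b c d : hom A B) :
  cadd S (cadd S a b) (cadd S c d) = cadd S (cadd S a c) (cadd S b d).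
Proof.
  rewrite !caddA; f_equal; rewrite <- !caddA; f_equal; apply caddC.
Qed.
Lemma cadd00 (A B : C) : cadd S (czero S A B) (czero S A B) = czero S A B.
Proof. apply cadd0. Qed.
End Gen.

Ltac norm := repeat first [ rewrite <- cassoc | rewrite cpair_comp | rewrite cpp0
  | rewrite cpp1 | rewrite cidl | rewrite cidr | rewrite ccomp0 | rewrite ccompD
  | rewrite cpi0D | rewrite cpi1D | rewrite cpi0Z | rewrite cpi1Z | rewrite cpair_eta0
  | rewrite cadd00 ].

Lemma alens_eq (C : CLACat) (A B : lob C) (f g : alens A B) :
  lfwd f = lfwd g -> lbwd f = lbwd g -> f = g.
Proof.
  destruct f as [f1 f2 fp], g as [g1 g2 gp]; simpl; intros -> ->.
  f_equal; apply proof_irrelevance.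
Qed.

Section LC.
Variable C : CLACat.
Local Notation S := (ccla C).
Local Notation "A ** B" := (cprod S A B) (at level 30).
Local Notation "f +' g" := (cadd S f g) (at level 50).
Local Notation "<< f , g >>" := (cpair S f g).
Local Notation L := (LensA C).

Lemma LensA_cat : IsCat L.
Proof.
  split; intros; apply alens_eq; simpl; unfold lcomp_bwd;
  cbn [lfwd lbwd lcomp lid]; unfold lcomp_bwd; norm; try reflexivity.
Qed.

Lemma ladd_add (A B : L) (f g : hom A B) : additive2 (lbwd f +' lbwd g).
Proof.
  destruct (lbwd_add f) as [fa fz], (lbwd_add g) as [ga gz]; split; intros.
  - rewrite !ccompD, fa, ga; apply cadd_swap.
  - rewrite !ccompD, fz, gz; apply cadd0.
Qed.
Definition ladd (A B : L) (f g : hom A B) : hom A B :=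
  {| lfwd := lfwd f +' lfwd g; lbwd := lbwd f +' lbwd g; lbwd_add := ladd_add f g |}.

Lemma lzero_add (A B : L) : additive2 (czero S (lo1 A ** lo2 B) (lo2 A)).
Proof. split; intros; rewrite !ccomp0; [symmetry; apply cadd0 | reflexivity]. Qed.
Definition lzero (A B : L) : hom A B :=
  {| lfwd := czero S _ _; lbwd := czero S _ _; lbwd_add := lzero_add A B |}.

Definition lprod (X Y : L) : L := mklob (lo1 X ** lo1 Y) (lo2 X ** lo2 Y).

Lemma lpi0_add (X Y : L) :
  additive2 (<< cpi1 S (lo1 X ** lo1 Y) (lo2 X), czero S _ (lo2 Y) >>).
Proof. split; intros; norm; [rewrite cpairD, cadd00 | rewrite cpairZ]; reflexivity. Qed.
Definition lpi0 (X Y : L) : hom (lprod X Y) X :=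
  @Build_alens C (lprod X Y) X (cpi0 S (lo1 X) (lo1 Y)) _ (lpi0_add X Y).
Lemma lpi1_add (X Y : L) :
  additive2 (<< czero S _ (lo2 X), cpi1 S (lo1 X ** lo1 Y) (lo2 Y) >>).
Proof. split; intros; norm; [rewrite cpairD, cadd00 | rewrite cpairZ]; reflexivity. Qed.
Definition lpi1 (X Y : L) : hom (lprod X Y) Y :=
  @Build_alens C (lprod X Y) Y (cpi1 S (lo1 X) (lo1 Y)) _ (lpi1_add X Y).

Definition lpair_bwd (Z X Y : L) (f : hom Z X) (g : hom Z Y) :
  hom (lo1 Z ** (lo2 X ** lo2 Y)) (lo2 Z) :=
  (<< cpi0 S _ _, cpi1 S _ _ ;; cpi0 S _ _ >> ;; lbwd f) +'
  (<< cpi0 S _ _, cpi1 S _ _ ;; cpi1 S _ _ >> ;; lbwd g).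
Lemma lpair_add (Z X Y : L) (f : hom Z X) (g : hom Z Y) : additive2 (lpair_bwd f g).
Proof.
  destruct (lbwd_add f) as [fa fz], (lbwd_add g) as [ga gz]; unfold lpair_bwd;
  split; intros; norm.
  - rewrite fa, ga; apply cadd_swap.
  - rewrite fz, gz; apply cadd0.
Qed.
Definition lpair (Z X Y : L) (f : hom Z X) (g : hom Z Y) : hom Z (lprod X Y) :=
  @Build_alens C Z (lprod X Y) (<< lfwd f, lfwd g >>) (lpair_bwd f g) (lpair_add f g).

Definition lterm : L := mklob (cterm S) (cterm S).
Definition lbang (X : L) : hom X lterm :=
  @Build_alens C X lterm (cbang S (lo1 X)) _ (lzero_add X lterm).

Definition LStr : CLAStr L :=
  {| cadd := ladd; czero := lzero; cprod := lprod; cpi0 := lpi0; cpi1 := lpi1;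
     cpair := lpair; cterm := lterm; cbang := lbang |}.

Lemma LStr_ok : IsCLA LStr.
Proof.
  split; intros; simpl.
  all: try (apply alens_eq; cbn [lfwd lbwd lcomp lid ladd lzero lpair lpi0 lpi1 lbang];
    unfold lcomp_bwd, lpair_bwd;
    cbn [lfwd lbwd lcomp lid ladd lzero lpair lpi0 lpi1 lbang lo1 lo2 lprod lterm]; norm;
    try reflexivity; try apply caddA; try apply caddC; try apply cadd0).
  - rewrite (proj1 (lbwd_add f)); reflexivity.
  - rewrite (proj2 (lbwd_add f)); reflexivity.
  - unfold lpair_bwd; norm. rewrite (proj2 (lbwd_add g)), cadd0; reflexivity.
  - unfold lpair_bwd; norm. rewrite (proj2 (lbwd_add f)), cadd0l; reflexivity.
  - rewrite <- H, <- H0. simpl; norm. symmetry; apply cpair_eta.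
  - rewrite <- H, <- H0.
    cbn [lfwd lbwd lcomp lpi0 lpi1 comp LensA cpi0 cpi1 LStr]; unfold lcomp_bwd;
    cbn [lfwd lbwd lpi0 lpi1 lo1 lo2 lprod]; norm.
    rewrite <- (proj1 (lbwd_add h)). cbn [lo1 lo2 lprod cprod LStr]. norm. rewrite cpairD, cadd0, cadd0l, cpair_eta, cpair_eta0, cidl.
    reflexivity.
  - apply cbang_uniq.
  - transitivity (idm _ ;; lbwd h); [symmetry; apply cidl|].
    cbn [lo1 lo2 lterm cterm LStr]. rewrite <- cpair_eta0.
    rewrite (cbang_uniq (cpi1 S _ _)), <- (cbang_uniq (czero S _ _)).
    apply (proj2 (lbwd_add h)).
Qed.

End LC.

Section LF.
Variables (C D : CLACat) (F : FunData C D) (HF : CLAFun F).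
Local Notation SC := (ccla C).
Local Notation SD := (ccla D).
Local Notation P := (prod_inv HF).
Local Notation phi A B := (cpair SD (fmap F (cpi0 SC A B)) (fmap F (cpi1 SC A B))).

Lemma Fcomp (A B E : C) (f : hom A B) (g : hom B E) : fmap F (f ;; g) = fmap F f ;; fmap F g.
Proof. exact (clf_comp HF f g). Qed.
Lemma Fid (A : C) : fmap F (idm A) = idm _.
Proof. exact (clf_id HF A). Qed.
Lemma Fadd (A B : C) (f g : hom A B) : fmap F (cadd SC f g) = cadd SD (fmap F f) (fmap F g).
Proof. exact (clf_add HF f g). Qed.
Lemma Fzero (A B : C) : fmap F (czero SC A B) = czero SD _ _.
Proof. exact (clf_zero HF A B). Qed.

Lemma Ppi0 (Z : D) (A B : C) (x : hom Z _) : (x ;; P A B) ;; fmap F (cpi0 SC A B) = x ;; cpi0 SD _ _.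
Proof. rewrite cassoc, prod_inv_pi0; reflexivity. Qed.
Lemma Ppi1 (Z : D) (A B : C) (x : hom Z _) : (x ;; P A B) ;; fmap F (cpi1 SC A B) = x ;; cpi1 SD _ _.
Proof. rewrite cassoc, prod_inv_pi1; reflexivity. Qed.

Lemma Fpair (Z : D) (X A B : C) (h : hom Z (fob F X)) (a : hom X A) (b : hom X B) :
  h ;; fmap F (cpair SC a b) = cpair SD (h ;; fmap F a) (h ;; fmap F b) ;; P A B.
Proof.
  apply prod_inv_cancel; rewrite cassoc, <- Fcomp; norm; reflexivity.
Qed.

Ltac fnorm := repeat first [ rewrite Fcomp | rewrite Fid | rewrite Fadd | rewrite Fzero
  | rewrite <- cassoc | rewrite Fpair | rewrite Ppi0 | rewrite Ppi1
  | rewrite prod_inv_pi0 | rewrite prod_inv_pi1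
  | rewrite cpair_comp | rewrite cpp0
  | rewrite cpp1 | rewrite cidl | rewrite cidr | rewrite ccomp0 | rewrite ccompD
  | rewrite cpi0D | rewrite cpi1D | rewrite cpi0Z | rewrite cpi1Z | rewrite cpair_eta0
  | rewrite cadd00 ].

Lemma Fadditive (X Y : C) (h : hom X Y)
  (Hh : cadd SC (cpi0 SC X X) (cpi1 SC X X) ;; h = cadd SC (cpi0 SC X X ;; h) (cpi1 SC X X ;; h))
  (Z : D) (x y : hom Z (fob F X)) :
  cadd SD x y ;; fmap F h = cadd SD (x ;; fmap F h) (y ;; fmap F h).
Proof.
  set (w := cpair SD x y ;; P X X).
  assert (w0 : w ;; fmap F (cpi0 SC X X) = x) by (unfold w; rewrite Ppi0, cpp0; reflexivity).
  assert (w1 : w ;; fmap F (cpi1 SC X X) = y) by (unfold w; rewrite Ppi1, cpp1; reflexivity).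
  assert (E : cadd SD x y = w ;; fmap F (cadd SC (cpi0 SC X X) (cpi1 SC X X)))
    by (rewrite Fadd, ccompD, w0, w1; reflexivity).
  rewrite E, cassoc, <- Fcomp, Hh, Fadd, ccompD, !Fcomp, <- !cassoc, w0, w1.
  reflexivity.
Qed.

Lemma Fzeroadd (X Y : C) (h : hom X Y) (Hh : czero SC X X ;; h = czero SC X Y)
  (Z : D) : czero SD Z (fob F X) ;; fmap F h = czero SD _ _.
Proof.
  transitivity (czero SD Z (fob F X) ;; fmap F (czero SC X X) ;; fmap F h).
  { rewrite Fzero, ccomp0; reflexivity. }
  rewrite cassoc, <- Fcomp, Hh, Fzero, ccomp0; reflexivity.
Qed.

Lemma phi_add (A B : C) (Z : D) (x y : hom Z (fob F (cprod SC A B))) :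
  cadd SD x y ;; phi A B = cadd SD (x ;; phi A B) (y ;; phi A B).
Proof.
  rewrite !cpair_comp, cpairD, !(Fadditive (h := cpi0 SC A B)), !(Fadditive (h := cpi1 SC A B));
  try reflexivity; rewrite ?cpi0D, ?cpi1D; reflexivity.
Qed.
Lemma phi_zero (A B : C) (Z : D) : czero SD Z _ ;; phi A B = czero SD _ _.
Proof.
  rewrite cpair_comp, !Fzeroadd, cpairZ; try reflexivity; rewrite ?cpi0Z, ?cpi1Z; reflexivity.
Qed.
Lemma P_add (A B : C) (Z : D) (x y : hom Z _) :
  cadd SD x y ;; P A B = cadd SD (x ;; P A B) (y ;; P A B).
Proof.
  destruct (prod_inv_spec HF A B) as [H1 H2].
  rewrite <- (cidr (cadd SD (x ;; P A B) (y ;; P A B))), <- H2, <- cassoc, phi_add,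
    !cassoc, H1, !cidr; reflexivity.
Qed.
Lemma P_zero (A B : C) (Z : D) : czero SD Z _ ;; P A B = czero SD _ _.
Proof.
  destruct (prod_inv_spec HF A B) as [H1 H2].
  rewrite <- (cidr (czero SD Z (fob F (cprod SC A B)))), <- H2, <- cassoc, phi_zero;
  reflexivity.
Qed.

Local Notation LF := (LensA_fun HF).

Lemma psi_add (W : D) (A B : C) :
  additive2 (C:=D) (cpi1 SD W (fob F (cprod SC A B)) ;; phi A B).
Proof.
  split; intros; norm.
  - rewrite cpairD, <- !(Fadditive (h := cpi0 SC A B)), <- !(Fadditive (h := cpi1 SC A B));
      try reflexivity; rewrite ?cpi0D, ?cpi1D; reflexivity.
  - rewrite !Fzeroadd, cpairZ; try reflexivity; rewrite ?cpi0Z, ?cpi1Z; reflexivity.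
Qed.

Lemma LF_ok : IsCLAFun (LStr C) (LStr D) LF.
Proof.
  split.
  - intros; apply alens_eq; simpl; [apply Fid | unfold fbar; apply prod_inv_pi1].
  - intros; apply alens_eq; simpl; [apply Fcomp |].
    unfold fbar, lcomp_bwd; simpl; unfold lcomp_bwd. fnorm. reflexivity.
  - intros; apply alens_eq; simpl; [apply Fadd |].
    unfold fbar; simpl; rewrite Fadd, ccompD; reflexivity.
  - intros; apply alens_eq; simpl; [apply Fzero |].
    unfold fbar; simpl; rewrite Fzero, ccomp0; reflexivity.
  - intros X Y.
    exists (@Build_alens D (lprod (fob LF X) (fob LF Y)) (fob LF (lprod X Y))
      (P (lo1 X) (lo1 Y)) _ (psi_add _ (lo2 X) (lo2 Y))).
    destruct (prod_inv_spec HF (lo1 X) (lo1 Y)) as [H1 H2].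
    split; apply alens_eq; simpl.
    + exact H1.
    + unfold lcomp_bwd; simpl; unfold lpair_bwd, fbar; cbn [lbwd lfwd lpi0 lpi1 lo1 lo2 lprod]. fnorm.
      repeat first [rewrite <- P_add | rewrite cpairD | rewrite cadd0 | rewrite cadd0l]. fnorm.
      first [apply cpair_eta | rewrite <- cpair_comp, cassoc, (proj2 (prod_inv_spec HF (lo2 X) (lo2 Y))), cidr; reflexivity].
    + exact H2.
    + unfold lcomp_bwd; simpl; unfold lpair_bwd, fbar; cbn [lbwd lfwd lpi0 lpi1 lo1 lo2 lprod]. fnorm.
      repeat first [rewrite <- P_add | rewrite cpairD | rewrite cadd0 | rewrite cadd0l]. fnorm.
      first [apply cpair_eta | rewrite <- cpair_comp, cassoc, (proj2 (prod_inv_spec HF (lo2 X) (lo2 Y))), cidr; reflexivity].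
  - destruct (clf_term HF) as [t0 [T1 T2]].
    assert (U : forall (W : D) (a b : hom W (fob F (cterm SC))), a = b).
    { intros W a b. rewrite <- (cidr a), <- (cidr b), <- T2, <- !cassoc.
      rewrite (cbang_uniq (a ;; _)), (cbang_uniq (b ;; _)). reflexivity. }
    exists (@Build_alens D (lterm D) (fob LF (lterm C)) t0 _ (lzero_add (lterm D) (fob LF (lterm C)))).
    split.
    + transitivity (cbang (LStr D) (lterm D)); [apply (cla_bang_uniq (LStr_ok D)) |].
      symmetry; apply (cla_bang_uniq (LStr_ok D)).
    + apply alens_eq; simpl; [exact T2 | apply U].
Qed.
End LF.

Lemma prod_inv_idF (C : CLACat) (H : CLAFun (idF C)) (A B : C) : prod_inv H A B = idm _.
Proof.
  rewrite <- (cidl (prod_inv H A B)). symmetry. apply prod_inv_cancel; simpl; norm; reflexivity.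
Qed.

Lemma LensA_id (C : CLACat) (H : CLAFun (idF C)) : LensA_fun H = idF (LensA C).
Proof.
  unfold LensA_fun, idF.
  change (fun A : lob C => mklob (fob (idF C) (lo1 A)) (fob (idF C) (lo2 A))) with (fun A : lob C => A).
  f_equal.
  apply functional_extensionality_dep; intro A.
  apply functional_extensionality_dep; intro B.
  apply functional_extensionality_dep; intro l.
  apply alens_eq; simpl; [reflexivity|].
  unfold fbar; rewrite prod_inv_idF; apply cidl.
Qed.

Lemma prod_inv_comp (C D E : CLACat) (F : FunData C D) (G : FunData D E)
  (HF : CLAFun F) (HG : CLAFun G) (HGF : CLAFun (compF F G)) (A B : C) :
  prod_inv HGF A B = prod_inv HG (fob F A) (fob F B) ;; fmap G (prod_inv HF A B).
Proof.
  rewrite <- (cidl (prod_inv HGF A B)). symmetry. apply prod_inv_cancel; simpl.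
  - rewrite cassoc, <- (clf_comp HG), prod_inv_pi0, prod_inv_pi0, cidl; reflexivity.
  - rewrite cassoc, <- (clf_comp HG), prod_inv_pi1, prod_inv_pi1, cidl; reflexivity.
Qed.

Lemma LensA_comp (C D E : CLACat) (F : FunData C D) (G : FunData D E)
  (HF : CLAFun F) (HG : CLAFun G) (HGF : CLAFun (compF F G)) :
  LensA_fun HGF = compF (LensA_fun HF) (LensA_fun HG).
Proof.
  unfold LensA_fun, compF. simpl.
  f_equal.
  apply functional_extensionality_dep; intro A.
  apply functional_extensionality_dep; intro B.
  apply functional_extensionality_dep; intro l.
  apply alens_eq; simpl; [reflexivity|].
  unfold fbar; rewrite (prod_inv_comp HF HG). simpl. rewrite (clf_comp HG), cassoc; reflexivity.
Qed.

Theorem theorem2p10 :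
  (exists S : forall C : CLACat, CLAStr (LensA C),
      (forall C : CLACat, IsCat (LensA C) /\ IsCLA (S C)) /\
      (forall (C D : CLACat) (F : FunData C D) (HF : CLAFun F),
          IsCLAFun (S C) (S D) (LensA_fun HF))) /\
  (forall (C : CLACat) (H : CLAFun (idF C)),
      LensA_fun H = idF (LensA C)) /\
  (forall (C D E : CLACat) (F : FunData C D) (G : FunData D E)
          (HF : CLAFun F) (HG : CLAFun G) (HGF : CLAFun (compF F G)),
      LensA_fun HGF = compF (LensA_fun HF) (LensA_fun HG)).
Proof.
  split; [|split].
  - exists LStr; split.
    + intro C; split; [apply LensA_cat | apply LStr_ok].
    + intros; apply LF_ok.
  - exact LensA_id.
  - exact LensA_comp.
Qed.
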